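(* Let $\operatorname{R}_3=\{a_0,a_1,a_2\}$ be the dihedral quandle of order $3$, with $a_ia_j=a_{2j-i \pmod 3}$. Then the set of non-zero maximal quandles in $\mathbb{Z}_2[\operatorname{R}_3]$ is $$\operatorname{mq}(\mathbb{Z}_2[\operatorname{R}_3])=\Big\{\{a_0+a_1+a_2\},~\operatorname{R}_3,~\{a_0+a_1,\,a_0+a_2,\,a_1+a_2\}\Big\},$$ and the quandle $\{a_0+a_1,\,a_0+a_2,\,a_1+a_2\}$ is isomorphic to $\operatorname{R}_3$.
   Context: A quandle is a non-empty set with a binary operation $(u,v)\mapsto uv$ such that $uu=u$; for all $u,v$ there is a unique $w$ with $u=wv$; and $(uv)w=(uw)(vw)$. For a quandle $Q$, the quandle ring $\mathbb{Z}_2[Q]$ is the $\mathbb{Z}_2$-vector space with basis $Q$, with multiplication $\big(\sum_i\alpha_i q_i\big)\big(\sum_j\beta_j q_j\big)=\sum_{i,j}\alpha_i\beta_j (q_iq_j)$. A quandle in $\mathbb{Z}_2[Q]$ is a subset closed under the ring multiplication which is a quandle under the restricted multiplication. $\operatorname{mq}(\mathbb{Z}_2[Q])$ is the set of all quandles in $\mathbb{Z}_2[Q]$ different from $\{0\}$ that are maximal with respect to inclusion among quandles in $\mathbb{Z}_2[Q]$. *)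

(* Defs.v *)
From HB Require Import structures.
From mathcomp Require Import all_boot all_algebra.
Set Implicit Arguments. Unset Strict Implicit. Unset Printing Implicit Defensive.
Import GRing.Theory.
Local Open Scope ring_scope.

(* The quandle ring Z_2[Q] of a finite quandle (Q, op): elements are finitely
   supported functions Q -> F_2, i.e. F_2-linear combinations of basis Q. *)
Notation qring Q := {ffun Q -> 'F_2}.

Definition qbasis (Q : finType) (q : Q) : qring Q := [ffun x => (x == q)%:R].

Definition qmul (Q : finType) (op : Q -> Q -> Q) (u v : qring Q) : qring Q :=
  [ffun q => \sum_(i : Q) \sum_(j : Q | op i j == q) u i * v j].

Definition is_quandle_in (T : finType) (m : T -> T -> T) (S : {set T}) : Prop :=
  [/\ S != set0,
      (forall u v, u \in S -> v \in S -> m u v \in S),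
      (forall u, u \in S -> m u u = u),
      (forall u v, u \in S -> v \in S ->
         exists w, [/\ w \in S, u = m w v &
                       forall w', w' \in S -> u = m w' v -> w' = w]) &
      (forall u v w, u \in S -> v \in S -> w \in S ->
         m (m u v) w = m (m u w) (m v w))].

Definition in_mq (Q : finType) (op : Q -> Q -> Q) (S : {set qring Q}) : Prop :=
  [/\ is_quandle_in (qmul op) S,
      S != [set (0 : qring Q)] &
      forall S', is_quandle_in (qmul op) S' -> S \subset S' -> S' = S].

Definition R3op (i j : 'I_3) : 'I_3 := inZp (2 * j + 3 - i).

Definition a (i : 'I_3) : qring 'I_3 := qbasis i.

(* Main.v *)
Require Import Defs.
From HB Require Import structures.
From mathcomp Require Import all_boot all_algebra.
From mathcomp Require Import ring.
Import GRing.Theory.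
Local Open Scope ring_scope.

Notation o0 := (@inZp 2 0).
Notation o1 := (@inZp 2 1).
Notation o2 := (@inZp 2 2).
Notation T := (qring 'I_3).
Notation m := (qmul R3op).

Definition mk (x y z : 'F_2) : T :=
  [ffun k : 'I_3 => if val k == 0%N then x else if val k == 1%N then y else z].

Lemma ord3P (k : 'I_3) : [\/ k = o0, k = o1 | k = o2].
Proof.
case: k => [[|[|[|//]]]] H; [apply: Or31|apply: Or32|apply: Or33]; exact/val_inj.
Qed.

Lemma F2P (x : 'F_2) : x = 0 \/ x = 1.
Proof. case: x => [[|[|//]]] i; [left|right]; exact/val_inj. Qed.

Lemma mulmk x0 x1 x2 y0 y1 y2 :
  m (mk x0 x1 x2) (mk y0 y1 y2) =
  mk (x0*y0+x2*y1+x1*y2) (x2*y0+x1*y1+x0*y2) (x1*y0+x0*y1+x2*y2).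
Proof.
apply/ffunP => k; rewrite !ffunE.
under eq_bigr => i _ do rewrite big_mkcond.
rewrite !big_ord_recl !big_ord0.
case: (ord3P k) => ->; rewrite !ffunE /=; ring.
Qed.

Lemma addmk x0 x1 x2 y0 y1 y2 :
  mk x0 x1 x2 + mk y0 y1 y2 = mk (x0+y0) (x1+y1) (x2+y2).
Proof. apply/ffunP => k; rewrite !ffunE; case: (ord3P k) => -> //. Qed.

Lemma zeromk : (0 : T) = mk 0 0 0.
Proof. apply/ffunP => k; rewrite !ffunE; case: (ord3P k) => -> //. Qed.

Lemma mkP (u : T) : exists x y z, u = mk x y z.
Proof.
exists (u o0), (u o1), (u o2).
apply/ffunP => k; rewrite !ffunE; case: (ord3P k) => -> //.
Qed.

Lemma mk_inj x y z x' y' z' : mk x y z = mk x' y' z' -> [/\ x = x', y = y' & z = z'].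
Proof.
move/ffunP => H; have := H o0; have := H o1; have := H o2.
by rewrite !ffunE /= => -> -> ->.
Qed.

Lemma mk_eq x y z x' y' z' : x = x' -> y = y' -> z = z' -> mk x y z = mk x' y' z'.
Proof. by move=> -> -> ->. Qed.

Definition amk (k : 'I_3) : T :=
  mk (val k == 0%N)%:R (val k == 1%N)%:R (val k == 2%N)%:R.

Lemma a_amk k : a k = amk k.
Proof.
apply/ffunP => q; rewrite !ffunE.
by case: (ord3P q) => ->; case: (ord3P k) => ->.
Qed.

Definition sigma : T := mk 1 1 1.

Lemma sigmaE : a o0 + a o1 + a o2 = sigma.
Proof. by rewrite !a_amk /amk !addmk; apply: mk_eq; apply/eqP. Qed.

Definition par (u : T) : 'F_2 := u o0 + u o1 + u o2.

Lemma parmk x y z : par (mk x y z) = x + y + z.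
Proof. by rewrite /par !ffunE. Qed.

Lemma par_mul u v : par (m u v) = par u * par v.
Proof.
have [x [y [z ->]]] := mkP u; have [x' [y' [z' ->]]] := mkP v.
rewrite mulmk !parmk; ring.
Qed.

Lemma mul0l v : m 0 v = 0.
Proof.
have [x' [y' [z' ->]]] := mkP v.
rewrite zeromk mulmk; apply: mk_eq; ring.
Qed.

Lemma mul0r v : m v 0 = 0.
Proof.
have [x' [y' [z' ->]]] := mkP v.
rewrite zeromk mulmk; apply: mk_eq; ring.
Qed.

Lemma mul_sigma_r u : par u = 1 -> m u sigma = sigma.
Proof.
have [x [y [z ->]]] := mkP u; rewrite parmk /sigma mulmk => H.
have E1 : x*1+z*1+y*1 = x+y+z by ring.
have E2 : z*1+y*1+x*1 = x+y+z by ring.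
have E3 : y*1+x*1+z*1 = x+y+z by ring.
by rewrite E1 E2 E3 H.
Qed.

Lemma mul_sigma_l v : par v = 0 -> m sigma v = 0.
Proof.
have [x [y [z ->]]] := mkP v; rewrite parmk /sigma mulmk zeromk => H.
have E1 : 1*x+1*y+1*z = x+y+z by ring.
have E2 : 1*x+1*y+1*z = x+y+z by ring.
have E3 : 1*x+1*y+1*z = x+y+z by ring.
by apply: mk_eq; rewrite -H; ring.
Qed.

Definition A : {set T} := [set a o0; a o1; a o2].
Definition B : {set T} := [set a o0 + a o1; a o0 + a o2; a o1 + a o2].

Ltac fin_eq := apply/eqP; apply: mk_eq; apply/eqP; done.
Ltac finish3 :=
  first [ by left
        | right; apply/orP; left; apply/orP; left; fin_eq
        | right; apply/orP; left; apply/orP; right; fin_eq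
        | right; apply/orP; right; fin_eq ].

Lemma odd_cases u : par u = 1 -> u = sigma \/ u \in A.
Proof.
have [x [y [z ->]]] := mkP u; rewrite parmk.
rewrite /A !inE !a_amk /amk /sigma.
case: (F2P x) => ->; case: (F2P y) => ->; case: (F2P z) => ->;
  first [by move/eqP | move=> _];
  finish3.
Qed.

Lemma even_cases u : par u = 0 -> u = 0 \/ u \in B.
Proof.
have [x [y [z ->]]] := mkP u; rewrite parmk.
rewrite /B !inE !a_amk /amk !addmk zeromk.
case: (F2P x) => ->; case: (F2P y) => ->; case: (F2P z) => ->;
  first [by move/eqP | move=> _];
  finish3.
Qed.
Lemma R3_idem i : R3op i i = i.
Proof. by case: (ord3P i) => ->; apply/val_inj. Qed.

Lemma R3_inv i j : R3op (R3op i j) j = i.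
Proof. by case: (ord3P i) => ->; case: (ord3P j) => ->; apply/val_inj. Qed.

Lemma R3_dist i j k : R3op (R3op i j) k = R3op (R3op i k) (R3op j k).
Proof.
by case: (ord3P i) => ->; case: (ord3P j) => ->; case: (ord3P k) => ->;
  apply/val_inj.
Qed.

Lemma image_quandle (g : 'I_3 -> T) (S : {set T}) :
  injective g -> (forall x, x \in S <-> exists i, x = g i) ->
  (forall i j, g (R3op i j) = m (g i) (g j)) -> is_quandle_in m S.
Proof.
move=> ginj HS hom.
have gS i : g i \in S by apply/HS; exists i.
split.
- by apply/set0Pn; exists (g o0).
- move=> u v /HS [i ->] /HS [j ->]; rewrite -hom; exact: gS.
- by move=> u /HS [i ->]; rewrite -hom R3_idem.
- move=> u v /HS [i ->] /HS [j ->]; exists (g (R3op i j)); split.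
  + exact: gS.
  + by rewrite -hom R3_inv.
  + move=> w' /HS [k ->]; rewrite -hom => /ginj ->.
    by rewrite R3_inv.
- move=> u v w /HS [i ->] /HS [j ->] /HS [k ->].
  by rewrite -!hom R3_dist.
Qed.

Lemma a_hom i j : a (R3op i j) = m (a i) (a j).
Proof.
rewrite !a_amk /amk mulmk.
by case: (ord3P i) => ->; case: (ord3P j) => ->; apply: mk_eq; apply/eqP.
Qed.

Lemma a_inj : injective a.
Proof.
move=> i j H; have := congr1 (fun u : T => u i) H; rewrite /= !ffunE eqxx.
by case: eqP => // _ /eqP.
Qed.

Lemma qA : is_quandle_in m A.
Proof.
apply: (@image_quandle a A a_inj _ a_hom) => x.
rewrite /A !inE; split.
- by case/orP => [/orP [] | ] /eqP ->; eexists.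
- case=> i ->; case: (ord3P i) => ->; rewrite eqxx ?orbT //.
Qed.

Definition f (i : 'I_3) : T := sigma + a i.

Lemma f_hom i j : f (R3op i j) = m (f i) (f j).
Proof.
rewrite /f /sigma !a_amk /amk !addmk mulmk.
by case: (ord3P i) => ->; case: (ord3P j) => ->; apply: mk_eq; apply/eqP.
Qed.

Lemma f_inj : injective f.
Proof. by move=> i j /addrI /a_inj. Qed.

Lemma f_mem x : x \in B <-> exists i, x = f i.
Proof.
have E0 : f o0 = a o1 + a o2.
  by rewrite /f /sigma !a_amk /amk !addmk; apply: mk_eq; apply/eqP.
have E1 : f o1 = a o0 + a o2.
  by rewrite /f /sigma !a_amk /amk !addmk; apply: mk_eq; apply/eqP.
have E2 : f o2 = a o0 + a o1.
  by rewrite /f /sigma !a_amk /amk !addmk; apply: mk_eq; apply/eqP.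
rewrite /B !inE; split.
- case/orP => [/orP [] | ] /eqP ->; [exists o2|exists o1|exists o0] => //.
- case=> i ->; case: (ord3P i) => ->; rewrite ?E0 ?E1 ?E2 eqxx ?orbT //.
Qed.

Lemma qB : is_quandle_in m B.
Proof. exact: (@image_quandle f B f_inj f_mem f_hom). Qed.

Lemma par_sigma : par sigma = 1.
Proof. by rewrite parmk; apply/eqP. Qed.

Lemma qsigma : is_quandle_in m [set sigma].
Proof.
have ss : m sigma sigma = sigma by apply: mul_sigma_r; exact: par_sigma.
split.
- by apply/set0Pn; exists sigma; rewrite inE.
- by move=> u v; rewrite !inE => /eqP -> /eqP ->; rewrite ss.
- by move=> u; rewrite !inE => /eqP ->.
- move=> u v; rewrite !inE => /eqP -> /eqP ->; exists sigma; split.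
  + by rewrite inE.
  + by rewrite ss.
  + by move=> w'; rewrite inE => /eqP.
- by move=> u v w; rewrite !inE => /eqP -> /eqP -> /eqP ->; rewrite !ss.
Qed.

Lemma parA u : u \in A -> par u = 1.
Proof.
rewrite /A !inE !a_amk /amk.
by case/orP => [/orP [] | ] /eqP ->; rewrite parmk; apply/eqP.
Qed.

Lemma parB u : u \in B -> par u = 0.
Proof.
rewrite /B !inE !a_amk /amk !addmk.
by case/orP => [/orP [] | ] /eqP ->; rewrite parmk; apply/eqP.
Qed.

Lemma par0 : par 0 = 0.
Proof. by rewrite zeromk parmk; apply/eqP. Qed.

Lemma sigma_notA : sigma \notin A.
Proof.
rewrite /A !inE !a_amk /amk /sigma.
by apply/negP; case/orP => [/orP [] | ] /eqP /mk_inj [] /eqP.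
Qed.

Lemma F2_10 : (1 : 'F_2) != 0.
Proof. by []. Qed.

Lemma classify S : is_quandle_in m S ->
  [\/ S = [set (0 : T)], S = [set sigma], S \subset A | S \subset B].
Proof.
case=> ne cl idm div dis.
case: (boolP (0 \in S)) => [S0|nS0].
  apply: Or41; apply/setP => u; rewrite inE; apply/idP/eqP => [uS|->//].
  by have [w [_ -> _]] := div u 0 uS S0; rewrite mul0r.
case: (boolP (sigma \in S)) => [Ss|nSs].
  apply: Or42; apply/setP => u; rewrite inE; apply/idP/eqP => [uS|->//].
  case: (F2P (par u)) => pu.
    by move: (cl _ _ Ss uS); rewrite mul_sigma_l // (negbTE nS0).
  have [w [_ _ U]] := div sigma sigma Ss Ss.
  rewrite (U u uS) ?mul_sigma_r //.
  by rewrite -(U sigma Ss) // mul_sigma_r // par_sigma.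
have key u v : u \in S -> v \in S -> par u = 1 -> par v = 0 -> False.
  move=> uS vS pu pv; have [w [_ E _]] := div u v uS vS.
  move: pu; rewrite E par_mul pv mulr0 => /esym/eqP; by [].
case/set0Pn: ne => u0 u0S.
case: (F2P (par u0)) => pu0.
- apply: Or44; apply/subsetP => u uS.
  case: (F2P (par u)) => pu; last by case: (key _ _ uS u0S pu pu0).
  case: (even_cases u pu) => // E; by move: uS; rewrite E (negbTE nS0).
- apply: Or43; apply/subsetP => u uS.
  case: (F2P (par u)) => pu; first by case: (key _ _ u0S uS pu0 pu).
  case: (odd_cases u pu) => // E; by move: uS; rewrite E (negbTE nSs).
Qed.

Lemma a_ne0 : a o0 != 0.
Proof.
apply/negP => /eqP H; have : a o0 \in A by rewrite /A !inE eqxx.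
by move/parA; rewrite H par0 => /eqP.
Qed.

Theorem theorem5p5 :
  let a0 := a (inZp 0) in let a1 := a (inZp 1) in let a2 := a (inZp 2) in
  (forall S : {set qring 'I_3},
     in_mq R3op S <->
       [\/ S = [set a0 + a1 + a2],
           S = [set a0; a1; a2] |
           S = [set a0 + a1; a0 + a2; a1 + a2]])
  /\
  (exists f : 'I_3 -> qring 'I_3,
     [/\ injective f,
         (forall x, x \in [set a0 + a1; a0 + a2; a1 + a2] <-> exists i, x = f i) &
         forall i j, f (R3op i j) = qmul R3op (f i) (f j)]).
Proof.
cbv zeta.
have Bin : a o0 + a o1 \in B by rewrite /B !inE eqxx.
have BneS : a o0 + a o1 != sigma.
  by apply/negP => /eqP H; have := parB _ Bin; rewrite H par_sigma => /eqP.
have Bne0 : a o0 + a o1 != 0.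
  apply/negP => /eqP; rewrite !a_amk /amk addmk zeromk.
  by move/mk_inj => [] /eqP.
have Ain : a o0 \in A by rewrite /A !inE eqxx.
have AnB : a o0 \notin B.
  by apply/negP => /parB; rewrite parA // => /eqP.
have SnB : sigma \notin B.
  by apply/negP => /parB; rewrite par_sigma => /eqP.
have Sne0 : sigma != 0.
  by apply/negP => /eqP; rewrite zeromk /sigma => /mk_inj [] /eqP.
have BnA : a o0 + a o1 \notin A.
  by apply/negP => /parA; rewrite parB // => /eqP.
split; last first.
  by exists f; split; [exact: f_inj | exact: f_mem | exact: f_hom].
move=> S; rewrite sigmaE; split.
- case=> qS n0 mx; case: (classify _ qS) => [S0|Ss|SA|SB].
  + by rewrite S0 eqxx in n0.
  + by apply: Or31.
  + by apply: Or32; apply/esym/mx => //; exact: qA.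
  + by apply: Or33; apply/esym/mx => //; exact: qB.
- case=> ->; split.
  + exact: qsigma.
  + apply/negP => /eqP/setP/(_ sigma); rewrite !inE eqxx => /esym/eqP.
    by apply/eqP.
  + move=> S' qS' sub; have sS' : sigma \in S' by apply: (subsetP sub); rewrite inE.
    case: (classify _ qS') => [S0|Ss|SA|SB] //.
    * by move: sS'; rewrite S0 inE (negbTE Sne0).
    * by move: sS'; move/(subsetP SA); rewrite (negbTE sigma_notA).
    * by move: sS'; move/(subsetP SB); rewrite (negbTE SnB).
  + exact: qA.
  + apply/negP => /eqP/setP/(_ (a o0)); rewrite Ain inE => /esym/eqP.
    by apply/eqP; exact: a_ne0.
  + move=> S' qS' sub; have sS' : a o0 \in S' by apply: (subsetP sub).
    case: (classify _ qS') => [S0|Ss|SA|SB].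
    * by move: sS'; rewrite S0 inE (negbTE a_ne0).
    * move: sS'; rewrite Ss inE => /eqP E.
      by move: Ain; rewrite E (negbTE sigma_notA).
    * by apply/eqP; rewrite eqEsubset SA sub.
    * by move: sS'; move/(subsetP SB); rewrite (negbTE AnB).
  + exact: qB.
  + apply/negP => /eqP/setP/(_ (a o0 + a o1)); rewrite Bin inE => /esym/eqP.
    by apply/eqP.
  + move=> S' qS' sub; have sS' : a o0 + a o1 \in S' by apply: (subsetP sub).
    case: (classify _ qS') => [S0|Ss|SA|SB].
    * by move: sS'; rewrite S0 inE (negbTE Bne0).
    * by move: sS'; rewrite Ss inE (negbTE BneS).
    * by move: sS'; move/(subsetP SA); rewrite (negbTE BnA).
    * by apply/eqP; rewrite eqEsubset SB sub.
Qed.
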